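(* Let $S$ be a real closed field and let $\mathfrak D$ be a non-empty convex subset of $S$ which is bounded above and has no least upper bound in $S$. Say that $x\in S$ satisfies ''$x<d$'' if $x$ is not an upper bound of $\mathfrak D$, and ''$x>d$'' if $x$ is an upper bound of $\mathfrak D$. Let $I$ be a definable interval of $S_{\geq 0}$ which contains $]\lambda,+\infty[\cap\mathfrak D$ for some $\lambda\in\mathfrak D$, and let $f\colon I\to S$ be a definable function. Assume that there exists $a\in I$ with $a<d$ such that $f(x)>d$ for every $x\in I$ with $a<x<d$. Then there exists $x\in I$ with $x>d$ and $f(x)>d$.
   Context: ''Definable'' means definable with parameters in the theory of real closed fields (equivalently, semi-algebraic). *)

(* Defs.v *)
From HB Require Import structures.
From mathcomp Require Import all_boot all_order all_algebra.
From mathcomp Require Import ordered_qelim.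
Set Implicit Arguments. Unset Strict Implicit. Unset Printing Implicit Defensive.
Import Order.TTheory GRing.Theory Num.Theory.
Local Open Scope ring_scope.

(* Definability with parameters in the language of ordered rings:
   a first-order formula of ord.formula S (constants from S allowed as
   parameters via Const), interpreted by ord.holds. *)

Definition definable_set (S : rcfType) (A : S -> Prop) : Prop :=
  exists phi : ord.formula S, forall x : S, A x <-> ord.holds [:: x] phi.

(* A function f : I -> S (I a subset of S, f represented as S -> S whose
   values outside I are irrelevant) is definable if its graph
   {(x, f x) | x in I} is a definable subset of S^2. *)
Definition definable_fun (S : rcfType) (I : S -> Prop) (f : S -> S) : Prop :=
  exists phi : ord.formula S, forall x y : S,
    (I x /\ y = f x) <-> ord.holds [:: x; y] phi.

Definition convex_set (S : rcfType) (D : S -> Prop) : Prop :=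
  forall x y z : S, D x -> D z -> x <= y -> y <= z -> D y.

Definition upper_bound (S : rcfType) (D : S -> Prop) (b : S) : Prop :=
  forall x : S, D x -> x <= b.

Definition bounded_above (S : rcfType) (D : S -> Prop) : Prop :=
  exists b : S, upper_bound D b.

Definition has_sup (S : rcfType) (D : S -> Prop) : Prop :=
  exists b : S, upper_bound D b /\ forall c : S, upper_bound D c -> b <= c.

Definition lt_cut (S : rcfType) (D : S -> Prop) (x : S) : Prop := ~ upper_bound D x.
Definition gt_cut (S : rcfType) (D : S -> Prop) (x : S) : Prop := upper_bound D x.

(* Main.v *)
Require Import Defs.
From HB Require Import structures.
From mathcomp Require Import all_boot all_order all_algebra.
From mathcomp Require Import ordered_qelim.
From mathcomp Require Import polyrcf.
From mathcomp Require qe_rcf.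
From Stdlib Require Import Classical.
Import Order.TTheory GRing.Theory Num.Theory.
Local Open Scope ring_scope.

Section Cut.
Variable S : rcfType.
Variable D : S -> Prop.
Hypothesis Dne : exists x, D x.
Hypothesis Dbd : bounded_above D.
Hypothesis Dns : ~ has_sup D.

Lemma D_lt x : D x -> lt_cut D x.
Proof.
move=> Dx ub; apply: Dns; exists x; split => // c; exact.
Qed.

Lemma ub_not_least c : gt_cut D c -> exists c', gt_cut D c' /\ c' < c.
Proof.
move=> uc; apply: NNPP => H; apply: Dns; exists c; split => // c' uc'.
rewrite leNgt; apply/negP => lt; apply: H; by exists c'.
Qed.

Lemma nonub_lt b : lt_cut D b -> exists y, D y /\ b < y.
Proof.
move=> nb; apply: NNPP => H; apply: nb => x Dx.
rewrite leNgt; apply/negP => lt; apply: H; by exists x.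
Qed.

Lemma lt_gt b c : lt_cut D b -> gt_cut D c -> b < c.
Proof.
move=> nb uc; rewrite ltNge; apply/negP => cb; apply: nb => x Dx.
exact: le_trans (uc x Dx) cb.
Qed.

Lemma lt_max b1 b2 : lt_cut D b1 -> lt_cut D b2 -> lt_cut D (Order.max b1 b2).
Proof. by case: (leP b1 b2). Qed.

Lemma gt_min c1 c2 : gt_cut D c1 -> gt_cut D c2 -> gt_cut D (Order.min c1 c2).
Proof. by case: (leP c1 c2). Qed.

Definition lc (P : S -> Prop) := exists b c, lt_cut D b /\ gt_cut D c /\
  forall x y, b < x < c -> b < y < c -> (P x <-> P y).

Lemma lc_op (P Q : S -> Prop) (op : Prop -> Prop -> Prop) :
  (forall A A' B B', (A <-> A') -> (B <-> B') -> (op A B <-> op A' B')) ->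
  lc P -> lc Q -> lc (fun x => op (P x) (Q x)).
Proof.
move=> hop [b1 [c1 [n1 [u1 h1]]]] [b2 [c2 [n2 [u2 h2]]]].
exists (Order.max b1 b2), (Order.min c1 c2); do 2?split; first exact: lt_max.
  exact: gt_min.
move=> x y /andP[]; rewrite gt_max lt_min => /andP[bx1 bx2] /andP[xc1 xc2].
move=> /andP[]; rewrite gt_max lt_min => /andP[by1 by2] /andP[yc1 yc2].
apply: hop; [apply: h1|apply: h2]; by apply/andP.
Qed.

Lemma avoid (s : seq S) b0 c0 : lt_cut D b0 -> gt_cut D c0 ->
  exists b c, lt_cut D b /\ gt_cut D c /\ b0 <= b /\ c <= c0 /\
    forall r, r \in s -> r <= b \/ c <= r.
Proof.
move=> nb0 uc0; elim: s => [|r s [b [c [nb [uc [bb [cc hs]]]]]]].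
  by exists b0, c0; do 4?split => //.
have [ur|nr] := classic (gt_cut D r).
  exists b, (Order.min c r); do 4?split => //.
  - exact: gt_min.
  - by rewrite ge_min cc.
  move=> x; rewrite inE => /orP[/eqP->|/hs [h|h]]; [right|left|right] => //.
    by rewrite ge_min lexx orbT.
  by rewrite ge_min h.
exists (Order.max b r), c; do 4?split => //.
- exact: lt_max.
- by rewrite le_max bb.
move=> x; rewrite inE => /orP[/eqP->|/hs [h|h]]; [left|left|right] => //.
  by rewrite le_max lexx orbT.
by rewrite le_max h.
Qed.

Lemma lc_poly (p : {poly S}) : exists b c, lt_cut D b /\ gt_cut D c /\
  forall x y, b < x < c -> b < y < c -> Num.sg p.[x] = Num.sg p.[y].
Proof.
have [x0 Dx0] := Dne; have nb0 := @D_lt x0 Dx0.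
have [c0 uc0] := Dbd.
have [->|p0] := eqVneq p 0.
  by exists x0, c0; split; [done|split; [done|]] => x y _ _; rewrite !horner0.
have [b [c [nb [uc [bb [cc hs]]]]]] := @avoid (roots p x0 c0) x0 c0 nb0 uc0.
exists b, c; split; [done|split; [done|]] => x y hx hy.
have nr : {in `]b, c[, forall z, ~~ root p z}.
  move=> z; rewrite in_itv /= => /andP[bz zc]; apply/negP => rz.
  have zi : z \in `]x0, c0[.
    by rewrite in_itv /= (le_lt_trans bb bz) (lt_le_trans zc cc).
  have [h|h] := hs z (root_in_roots p0 zi rz).
    by move: bz; rewrite ltNge h.
  by move: zc; rewrite ltNge h.
apply: (polyrN0_itv nr); by rewrite in_itv.
Qed.

Lemma lc_const (P : Prop) : lc (fun _ => P).
Proof.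
have [x0 Dx0] := Dne; have [c0 uc0] := Dbd.
by exists x0, c0; split; [exact: (@D_lt x0 Dx0)|split; [done|]].
Qed.

Lemma lc_sg (p : {poly S}) (F : S -> Prop) (G : S -> Prop) :
  (forall x, F x <-> G (Num.sg p.[x])) -> lc F.
Proof.
move=> hF; have [b [c [nb [uc h]]]] := lc_poly p.
exists b, c; split; [done|split; [done|]] => x y hx hy.
by rewrite hF hF (h x y hx hy).
Qed.

Lemma term_poly (t : GRing.term S) : GRing.rterm t ->
  exists p : {poly S}, forall x, GRing.eval [:: x] t = p.[x].
Proof.
elim: t => /=.
- case=> [|n] _; first by exists 'X => x; rewrite hornerX.
  by exists 0 => x; rewrite horner0; case: n.
- by move=> c _; exists c%:P => x; rewrite hornerC.
- by move=> n _; exists n%:R%:P => x; rewrite hornerC.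
- move=> t1 IH1 t2 IH2 /andP[/IH1[p1 h1] /IH2[p2 h2]].
  by exists (p1 + p2) => x; rewrite hornerD h1 h2.
- by move=> t1 IH1 /IH1[p1 h1]; exists (- p1) => x; rewrite hornerN h1.
- by move=> t1 IH1 n /IH1[p1 h1]; exists (p1 *+ n) => x; rewrite hornerMn h1.
- move=> t1 IH1 t2 IH2 /andP[/IH1[p1 h1] /IH2[p2 h2]].
  by exists (p1 * p2) => x; rewrite hornerM h1 h2.
- by [].
- by move=> t1 IH1 n /IH1[p1 h1]; exists (p1 ^+ n) => x; rewrite horner_exp h1.
Qed.

Lemma lc_form (f : ord.formula S) : ord.qf_form f -> ord.rformula f ->
  lc (fun x => ord.holds [:: x] f).
Proof.
elim: f => /=.
- by move=> b _ _; apply: lc_const.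
- move=> t1 t2 _ /andP[/term_poly[p1 h1] /term_poly[p2 h2]].
  apply: (@lc_sg (p1 - p2) _ (fun s => s == 0)) => x.
  by rewrite hornerD hornerN sgr_eq0 subr_eq0 h1 h2; split => [->|/eqP].
- move=> t1 t2 _ /andP[/term_poly[p1 h1] /term_poly[p2 h2]].
  apply: (@lc_sg (p1 - p2) _ (fun s => s < 0)) => x.
  by rewrite hornerD hornerN sgr_lt0 subr_lt0 h1 h2.
- move=> t1 t2 _ /andP[/term_poly[p1 h1] /term_poly[p2 h2]].
  apply: (@lc_sg (p1 - p2) _ (fun s => s <= 0)) => x.
  by rewrite hornerD hornerN sgr_le0 subr_le0 h1 h2.
- by [].
- move=> f1 IH1 f2 IH2 /andP[q1 q2] /andP[r1 r2].
  apply: (@lc_op _ _ (and)) (IH1 q1 r1) (IH2 q2 r2); tauto.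
- move=> f1 IH1 f2 IH2 /andP[q1 q2] /andP[r1 r2].
  apply: (@lc_op _ _ (or)) (IH1 q1 r1) (IH2 q2 r2); tauto.
- move=> f1 IH1 f2 IH2 /andP[q1 q2] /andP[r1 r2].
  apply: (@lc_op _ _ (fun A B => A -> B)) (IH1 q1 r1) (IH2 q2 r2); tauto.
- move=> f1 IH1 q1 r1.
  apply: (@lc_op _ _ (fun A _ => ~ A)) (IH1 q1 r1) (IH1 q1 r1); tauto.
- by [].
- by [].
Qed.

End Cut.

Lemma qe (S : rcfType) (f : ord.formula S) : exists g, (ord.qf_form g && ord.rformula g) /\
  forall e, ord.holds e f <-> ord.holds e g.
Proof.
have wf := @qe_rcf.wf_QE_wproj S; have vf := @qe_rcf.valid_QE_wproj S.
have qf := ord.quantifier_elim_wf wf (ord.to_rform_rformula f).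
eexists; split; first exact: qf.
move=> e; rewrite -ord.to_rformP; case/andP: qf => qf _.
split => h.
  apply/(ord.qf_evalP _ qf).
  exact/(ord.quantifier_elim_rformP wf vf e (ord.to_rform_rformula f)).
apply/(ord.quantifier_elim_rformP wf vf e (ord.to_rform_rformula f)).
exact/(ord.qf_evalP _ qf).
Qed.

Theorem lemma3p2 (S : rcfType) (D : S -> Prop) (i : interval S) (f : S -> S) :
  (exists x, D x) ->
  convex_set D ->
  bounded_above D ->
  ~ has_sup D ->
  (forall x, x \in i -> 0 <= x) ->
  (exists lam, D lam /\ forall x, D x -> lam < x -> x \in i) ->
  definable_fun (fun x => x \in i) f ->
  (exists a, a \in i /\ lt_cut D a /\
     forall x, x \in i -> a < x -> lt_cut D x -> gt_cut D (f x)) ->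
  exists x, x \in i /\ gt_cut D x /\ gt_cut D (f x).
Proof.
move=> Dne _ Dbd Dns _ [lam [Dlam hlam]] [psi hpsi] [a [ai [na ha]]].
pose phi := ord.Exists 1 (ord.And psi (ord.Le (GRing.Var _ 0) (GRing.Var _ 1))).
have hphi : forall x, ord.holds [:: x] phi <-> (x \in i /\ x <= f x).
  move=> x; rewrite /phi /=; split.
    by case=> y [/hpsi [xi ->] le]; split.
  by case=> xi le; exists (f x); split => //; apply/hpsi.
have [g [/andP[qg rg] hg]] := @qe S phi.
have [b [c [nb [uc hbc]]]] := @lc_form S D Dne Dbd Dns g qg rg.
have nl := @D_lt S D Dns lam Dlam.
have [y [Dy lty]] := @nonub_lt S D (Order.max b (Order.max a lam))
   (@lt_max S D _ _ nb (@lt_max S D _ _ na nl)).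
move: lty; rewrite !gt_max => /andP[by_ /andP[ay lamy]].
have ny := @D_lt S D Dns y Dy.
have yc : y < c by rewrite lt_neqAle (uc y Dy) andbT; apply/negP => /eqP e; apply: ny; rewrite e.
have [z [uz zc]] := @ub_not_least S D Dns c uc.
have bz := @lt_gt S D _ _ nb uz.
have yi := hlam y Dy lamy.
have hy : ord.holds [:: y] g.
  apply/hg/hphi; split => //.
  have fy := ha y yi ay ny.
  rewrite leNgt; apply/negP => fyy; apply: ny => x Dx.
  exact: le_trans (fy x Dx) (ltW fyy).
have /hg/hphi [zi zf] : ord.holds [:: z] g.
  by apply/(hbc y z) => //; apply/andP.
exists z; split => //; split => // x Dx.
exact: le_trans (uz x Dx) zf.
Qed.
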